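(* Let $x$ be a stable g-matching with $x\ne x^{\max}$, let $w\in W$, and let $(c,a)$ and $(c',a')$ be disjoint (no common edge) essential $w$-pairs under $x$. Let $z:=x_w+\mathbf 1^a-\mathbf 1^c$ and $z':=x_w+\mathbf 1^{a'}-\mathbf 1^{c'}$. Then: (i) the vectors $z+\mathbf 1^{a'}-\mathbf 1^{c'}$ and $z'+\mathbf 1^a-\mathbf 1^c$ are acceptable for $w$; (ii) no edge $d\in U_F^+(x)$ is interesting for $w$ under $y:=x_w+\mathbf 1^a-\mathbf 1^c+\mathbf 1^{a'}-\mathbf 1^{c'}$; and (iii) the pair $(c',a')$ is essential under $z$, and $(c,a)$ is essential under $z'$ (with $z$, resp. $z'$, in place of $x_w$ in the definitions of legal and essential $w$-pairs).
   Context: Let $G=(V,E)$ be a finite bipartite graph with color classes $W$ and $F$; the edge joining $w\in W$ and $f\in F$ is written $wf$. Let $b\in\mathbb Z_+^E$ be capacities. For $v\in V$, $E_v$ is the set of edges at $v$, $\mathcal B_v=\{z\in\mathbb Z_+^{E_v}: z\le b|_{E_v}\}$, $\mathbf 1^e$ the unit vector of $e$, $|z|=\sum_e|z(e)|$, $\wedge,\vee$ componentwise min/max. Each $v$ has a choice function $C_v:\mathcal B_v\to\mathcal B_v$ with $C_v(z)\le z$ and, for all $z,z'$: (A1) $z\ge z'\ge C_v(z)\Rightarrow C_v(z')=C_v(z)$; (A2) $z\ge z'\Rightarrow C_v(z)\wedge z'\le C_v(z')$; (A3) $z\ge z'\Rightarrow|C_v(z)|\ge|C_v(z')|$. $z$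 is acceptable if $C_v(z)=z$; for distinct acceptable $z,z'$, $z'\prec_v z$ iff $C_v(z\vee z')=z$. $x_v$ = restriction of $x$ to $E_v$. A g-matching is $x\in\mathbb Z_+^E$, $x\le b$, each $x_v$ acceptable; $x\prec_F y$ (distinct) iff $x_f\preceq_f y_f$ for all $f\in F$. $e\in E_v$ is interesting for $v$ under acceptable $z$ if some $z'\in\mathcal B_v$ has $z'(e)>z(e)$, $z'(e')=z(e')$ for $e'\neq e$, $C_v(z')(e)>z(e)$; $e=wf$ is interesting for $v\in\{w,f\}$ under a g-matching $x$ if so under $x_v$, and blocks $x$ if interesting for both endpoints; stable g-matchings (no blocking edge) form a finite lattice under $\prec_F$ with maximum $x^{\max}$. For stable $x$: $U_F^+(x)$ = edges $wf$ interesting for $f$ under $x$; $U_F^-(x)$ = edges $wf$ with $x(wf)>0$ not interesting for $f$ under $x$. For $w\in W$, a legal $w$-pair under $x$ is $(c,a)$ with $c\in U_F^-(x)\cap E_w$, $a\in U_F^+(x)\cap E_w$ and $C_w(x_w+\mathbf 1^a-\mathbf 1^c)=x_w+\mathbf 1^a-\mathbf 1^c$; it is essential if no $d\in(U_F^+(x)\cap E_w)\setminus\{a\}$ is interesting for $w$ under $x_w+\mathbf 1^a-\mathbf 1^c$. *)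

(* Defs.v *)
From mathcomp Require Import all_boot.
Set Implicit Arguments. Unset Strict Implicit. Unset Printing Implicit Defensive.

(* A finite bipartite graph: colour classes W, F, edge set E, each edge e
   joins ew e \in W and ef e \in F.
   A vector z \in Z_+^{E_v} is represented by a function E -> nat that
   vanishes outside E_v. *)

Section Defs.
Variables (W F E : finType) (ew : E -> W) (ef : E -> F) (b : E -> nat).
Variable C : W + F -> {ffun E -> nat} -> {ffun E -> nat}.

Definition vec := {ffun E -> nat}.

Definition incident (v : W + F) (e : E) : bool :=
  match v with inl w => ew e == w | inr f => ef e == f end.

Definition inB (v : W + F) (z : vec) : Prop :=
  forall e, z e <= (if incident v e then b e else 0).

Definition vle (z z' : vec) : Prop := forall e, z e <= z' e.
Definition vmin (z z' : vec) : vec := [ffun e => minn (z e) (z' e)].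
Definition vmax (z z' : vec) : vec := [ffun e => maxn (z e) (z' e)].
Definition vnorm (z : vec) : nat := \sum_e z e.

Definition restr (v : W + F) (x : vec) : vec :=
  [ffun e => if incident v e then x e else 0].

Definition swap (z : vec) (a c : E) : vec :=
  [ffun e => z e + (e == a) - (e == c)].

Definition choice_axioms : Prop :=
  forall v,
    (forall z, inB v z -> vle (C v z) z) /\
    (forall z z', inB v z -> inB v z' ->
       vle z' z -> vle (C v z) z' -> C v z' = C v z) /\
    (forall z z', inB v z -> inB v z' ->
       vle z' z -> vle (vmin (C v z) z') (C v z')) /\
    (forall z z', inB v z -> inB v z' ->
       vle z' z -> vnorm (C v z') <= vnorm (C v z)).

Definition acceptable (v : W + F) (z : vec) : Prop := inB v z /\ C v z = z.

Definition prefer (v : W + F) (z' z : vec) : Prop :=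
  acceptable v z /\ acceptable v z' /\ z <> z' /\ C v (vmax z z') = z.

Definition preceq (v : W + F) (z' z : vec) : Prop := z' = z \/ prefer v z' z.

Definition interesting (v : W + F) (z : vec) (e : E) : Prop :=
  incident v e /\
  exists z' : vec, inB v z' /\ z e < z' e /\
    (forall e', e' != e -> z' e' = z e') /\ z e < C v z' e.

Definition gmatching (x : vec) : Prop :=
  (forall e, x e <= b e) /\ forall v, acceptable v (restr v x).

Definition blocks (x : vec) (e : E) : Prop :=
  interesting (inl (ew e)) (restr (inl (ew e)) x) e /\
  interesting (inr (ef e)) (restr (inr (ef e)) x) e.

Definition stable (x : vec) : Prop := gmatching x /\ forall e, ~ blocks x e.

Definition precF (x y : vec) : Prop :=
  x <> y /\ forall f : F, preceq (inr f) (restr (inr f) x) (restr (inr f) y).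

Definition is_xmax (xmax : vec) : Prop :=
  stable xmax /\ forall y, stable y -> y = xmax \/ precF y xmax.

Definition UFplus (x : vec) (e : E) : Prop :=
  interesting (inr (ef e)) (restr (inr (ef e)) x) e.
Definition UFminus (x : vec) (e : E) : Prop := 0 < x e /\ ~ UFplus x e.

(* legal / essential w-pairs (c, a) under x, relative to the vector z
   (z = x_w in the paper's definition; other z for part (iii)) *)
Definition legal (x : vec) (w : W) (z : vec) (c a : E) : Prop :=
  incident (inl w) c /\ incident (inl w) a /\ UFminus x c /\ UFplus x a /\
  acceptable (inl w) (swap z a c).

Definition essential (x : vec) (w : W) (z : vec) (c a : E) : Prop :=
  legal x w z c a /\
  forall d, incident (inl w) d -> UFplus x d -> d != a ->
    ~ interesting (inl w) (swap z a c) d.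

End Defs.

(* Main.v *)
Require Import Defs.
From mathcomp Require Import all_boot zify.

Lemma vnorm_swap (E : finType) (v : {ffun E -> nat}) a c :
  a != c -> 0 < v c -> vnorm (swap v a c) = vnorm v.
Proof.
move=> ac vc; rewrite /vnorm (bigD1 c) // [RHS](bigD1 c) //=.
rewrite (bigD1 a) //= [X in _ = _ + X](bigD1 a) //=.
rewrite !ffunE eqxx (negbTE ac) eq_sym (negbTE ac) /=.
have -> : \sum_(i | (i != c) && (i != a)) swap v a c i = \sum_(i | (i != c) && (i != a)) v i.
  by apply: eq_bigr => i /andP [ic ia]; rewrite ffunE (negbTE ic) (negbTE ia) /= addn0 subn0.
rewrite eqxx; lia.
Qed.

Lemma vnorm_le (E : finType) (p q : {ffun E -> nat}) d :
  (forall e, e != d -> q e <= p e) -> vnorm p <= vnorm q -> p d <= q d.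
Proof.
move=> H; rewrite /vnorm (bigD1 d) // [X in _ <= X](bigD1 d) //=.
have : \sum_(i | i != d) q i <= \sum_(i | i != d) p i by apply: leq_sum.
lia.
Qed.

Ltac clean := repeat match goal with
 | H : is_true (?x != ?x) |- _ => by rewrite eqxx in H
 | |- context [?x == ?x] => rewrite eqxx
 | H : is_true (?x != ?y) |- context [?x == ?y] => rewrite (negbTE H)
 | H : is_true (?x != ?y) |- context [?y == ?x] => rewrite [y == x]eq_sym (negbTE H)
 end.

Ltac splitall E := clean; repeat (match goal with
  |- context [(?x == ?y :> Finite.sort E)] => case: (eqVneq x y) => [?|?]; [subst x|] end; clean).

Lemma vals (E : finType) (X : {ffun E -> nat}) a c a' c' :
  a != c -> a != c' -> a != a' -> c != c' -> c != a' -> a' != c' ->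
  0 < X c -> 0 < X c' ->
  let z := swap X a c in let z' := swap X a' c' in let y := swap z a' c' in
  swap z' a c = y /\
      (forall e, e != a' -> y e <= z e) /\
      (forall e, e != a -> y e <= z' e) /\
      (y a' = z' a' /\ y a = z a) /\
      (z a' < z' a' /\ z' a < z a) /\
      ((forall d, d != c' -> z d <= y d) /\ (forall d, d != c -> z' d <= y d)) /\
    0 < z c'.
Proof.
move=> *.
split; [|split; [|split; [|split; [|split; [|split]]]]].
- by apply/ffunP => e; rewrite !ffunE; splitall E; lia.
- by move=> e ?; rewrite !ffunE; splitall E; lia.
- by move=> e ?; rewrite !ffunE; splitall E; lia.
- by rewrite !ffunE; splitall E; lia.
- by rewrite !ffunE; splitall E; lia.
- by split=> d ?; rewrite !ffunE; splitall E; lia.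
- by rewrite !ffunE; splitall E; lia.
Qed.

Theorem lemma3p7 (W F E : finType) (ew : E -> W) (ef : E -> F)
  (Hsimple : injective (fun e => (ew e, ef e)))
  (b : E -> nat) (C : W + F -> {ffun E -> nat} -> {ffun E -> nat})
  (HC : choice_axioms ew ef b C)
  (x xmax : {ffun E -> nat})
  (Hx : stable ew ef b C x) (Hxmax : is_xmax ew ef b C xmax) (Hne : x <> xmax)
  (w : W) (c a c' a' : E)
  (Hess : essential ew ef b C x w (restr ew ef (inl w) x) c a)
  (Hess' : essential ew ef b C x w (restr ew ef (inl w) x) c' a')
  (Hdisj : [/\ c != c', c != a', a != c' & a != a']) :
  [/\ acceptable ew ef b C (inl w)
        (swap (swap (restr ew ef (inl w) x) a c) a' c'),
      acceptable ew ef b C (inl w)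
        (swap (swap (restr ew ef (inl w) x) a' c') a c),
      (forall d, UFplus ew ef b C x d ->
         ~ interesting ew ef b C (inl w)
             (swap (swap (restr ew ef (inl w) x) a c) a' c') d),
      essential ew ef b C x w (swap (restr ew ef (inl w) x) a c) c' a'
    & essential ew ef b C x w (swap (restr ew ef (inl w) x) a' c') c a].
Proof.

have [HC1 [HC2 [HC3 HC4]]] := HC (inl w).
have HXacc := Hx.1.2 (inl w).
pose upd := fun (v : {ffun E -> nat}) (d : E) (n : nat) => [ffun e => if e == d then n else v e].
have down : forall u v, inB ew ef b (inl w) v -> vle u v -> inB ew ef b (inl w) u.
  by move=> u v vB uv e; apply: leq_trans (uv e) (vB e).
have G : forall v d n, acceptable ew ef b C (inl w) v -> ~ interesting ew ef b C (inl w) v d ->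
    incident ew ef (inl w) d -> v d < n -> inB ew ef b (inl w) (upd v d n) -> C (inl w) (upd v d n) = v.
  move=> v d n [vB Cv] nint id vn MB.
  have vM : vle v (upd v d n).
    by move=> e; rewrite ffunE; case: (eqVneq e d) => [->|//]; exact: ltnW.
  have le : vle (C (inl w) (upd v d n)) v.
    move=> e; case: (eqVneq e d) => [->|ed].
    - rewrite leqNgt; apply/negP => H; apply: nint; split=> //; exists (upd v d n); split=> //.
      split; first by rewrite ffunE eqxx.
      split=> //. by move=> e' /negbTE e'd; rewrite ffunE e'd.
    - by apply: leq_trans (HC1 _ MB e) _; rewrite ffunE (negbTE ed).
  by rewrite -(HC2 _ _ MB vB vM le) Cv.
have G2 : forall v d1 n1 d2 n2, acceptable ew ef b C (inl w) v ->
    ~ interesting ew ef b C (inl w) v d1 -> ~ interesting ew ef b C (inl w) v d2 ->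
    incident ew ef (inl w) d1 -> incident ew ef (inl w) d2 -> v d1 < n1 -> v d2 < n2 ->
    inB ew ef b (inl w) (upd (upd v d1 n1) d2 n2) -> C (inl w) (upd (upd v d1 n1) d2 n2) = v.
  move=> v d1 n1 d2 n2 vA nint1 nint2 id1 id2 vn1 vn2 MB.
  case: (eqVneq d1 d2) => [e12|d12].
    subst d2.
    have E1 : upd (upd v d1 n1) d1 n2 = upd v d1 n2.
      by apply/ffunP => e; rewrite !ffunE; case: (e == d1).
    rewrite E1 in MB *; exact: G.
  have vM : vle v (upd (upd v d1 n1) d2 n2).
    move=> e; rewrite !ffunE; splitall E; lia.
  have V1M : vle (upd v d1 n1) (upd (upd v d1 n1) d2 n2).
    move=> e; rewrite !ffunE; splitall E; lia.
  have V2M : vle (upd v d2 n2) (upd (upd v d1 n1) d2 n2).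
    move=> e; rewrite !ffunE; splitall E; lia.
  have V1B := down _ _ MB V1M.
  have V2B := down _ _ MB V2M.
  have CV1 := G _ _ _ vA nint1 id1 vn1 V1B.
  have CV2 := G _ _ _ vA nint2 id2 vn2 V2B.
  have le : vle (C (inl w) (upd (upd v d1 n1) d2 n2)) v.
    move=> e.
    have h1 := HC3 _ _ MB V1B V1M e. have h2 := HC3 _ _ MB V2B V2M e.
    have h3 := HC1 _ MB e.
    move: h1 h2 h3; rewrite CV1 CV2 !ffunE; splitall E; lia.
  by rewrite -(HC2 _ _ MB vA.1 vM le) vA.2.
have L : forall M m u, inB ew ef b (inl w) M -> inB ew ef b (inl w) u -> vle u M ->
    C (inl w) M = m -> (forall e, minn (m e) (u e) <= C (inl w) u e) /\
    vnorm (C (inl w) u) <= vnorm m.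
  move=> M m u MB uB uM CM; split.
    by move=> e; have := HC3 _ _ MB uB uM e; rewrite ffunE CM.
  by rewrite -CM; apply: HC4.

set X := restr ew ef (inl w : W + F) x.
case: Hess => [[Hic [Hia [[Hxc HnUc] [HUa Hzacc]]]] Hess2].
case: Hess' => [[Hic' [Hia' [[Hxc' HnUc'] [HUa' Hz'acc]]]] Hess2'].
case: Hdisj => cc' ca' ac' aa'.
have Xc : 0 < X c by rewrite /X /restr ffunE Hic.
have Xc' : 0 < X c' by rewrite /X /restr ffunE Hic'.
have ac : a != c by apply/eqP => eac; apply: HnUc; rewrite -eac.
have a'c' : a' != c' by apply/eqP => eac; apply: HnUc'; rewrite -eac.

have updE : forall v d n e, upd v d n e = if e == d then n else v e.
  by move=> *; rewrite ffunE.
have H := @vals E X a c a' c' ac ac' aa' cc' ca' a'c' Xc Xc'.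
cbv zeta in H.
case: H => [y2 [V1 [V2 [[Vya' Vya] [[Vza' Vz'a] [[V5 V6] Vzc']]]]]].
set z := swap X a c in y2 V1 V2 Vya' Vya Vza' Vz'a V5 V6 Vzc' Hzacc Hess2 Hz'acc Hess2' *.
set z' := swap X a' c' in y2 V1 V2 Vya' Vya Vza' Vz'a V5 V6 Vzc' Hzacc Hess2 Hz'acc Hess2' *.
set y := swap z a' c' in y2 V1 V2 Vya' Vya V5 V6 *.
have nz : vnorm z = vnorm X by apply: vnorm_swap.
have nz' : vnorm z' = vnorm X by apply: vnorm_swap.
have ny : vnorm y = vnorm z.
  by apply: vnorm_swap.
have yE : swap z a' c' = y by [].
clearbody y z z' X.
have a'a : a' != a by rewrite eq_sym.
have Hy : acceptable ew ef b C (inl w) y.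
  have yB : inB ew ef b (inl w) y.
    move=> e; case: (eqVneq e a') => [->|ea'].
      by rewrite Vya'; exact: Hz'acc.1 a'.
    exact: leq_trans (V1 _ ea') (Hzacc.1 e).
  have M1B : inB ew ef b (inl w) (upd z a' (z' a')).
    by move=> e; rewrite updE; case: ifP => [/eqP->|_]; [exact: Hz'acc.1 | exact: Hzacc.1].
  have CM1 := G z a' (z' a') Hzacc (Hess2 a' Hia' HUa' a'a) Hia' Vza' M1B.
  have yM1 : vle y (upd z a' (z' a')).
    by move=> e; rewrite updE; case: (eqVneq e a') => [->|ea']; [rewrite Vya' | exact: V1].
  have M2B : inB ew ef b (inl w) (upd z' a (z a)).
    by move=> e; rewrite updE; case: ifP => [/eqP->|_]; [exact: Hzacc.1 | exact: Hz'acc.1].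
  have CM2 := G z' a (z a) Hz'acc (Hess2' a Hia HUa aa') Hia Vz'a M2B.
  have yM2 : vle y (upd z' a (z a)).
    by move=> e; rewrite updE; case: (eqVneq e a) => [->|ea]; [rewrite Vya | exact: V2].
  have [L1 _] := L _ _ _ M1B yB yM1 CM1.
  have [L2 _] := L _ _ _ M2B yB yM2 CM2.
  split=> //; apply/ffunP => e; apply/eqP; rewrite eqn_leq (HC1 _ yB e) /=.
  case: (eqVneq e a') => [->|ea'].
    by have h := L2 a'; rewrite -Vya' minnn in h.
  by have h := L1 e; rewrite (minn_idPr (V1 e ea')) in h.
have Hii : forall d, UFplus ew ef b C x d -> ~ interesting ew ef b C (inl w) y d.
  move=> d HUd [Hid [u [uB [ud [uo Cud]]]]].
  have dc : d != c by apply/eqP => edc; apply: HnUc; rewrite -edc.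
  have dc' : d != c' by apply/eqP => edc; apply: HnUc'; rewrite -edc.
  have P1 : d != a -> (forall e, minn (z e) (u e) <= C (inl w) u e) /\ vnorm (C (inl w) u) <= vnorm z.
    move=> da.
    have MB : inB ew ef b (inl w) (upd (upd z a' (z' a')) d (u d)).
      move=> e; rewrite !updE; case: ifP => [/eqP->|_]; first exact: uB.
      by case: ifP => [/eqP->|_]; [exact: Hz'acc.1|exact: Hzacc.1].
    have zd : z d < u d by apply: leq_ltn_trans (V5 d dc') ud.
    have CM := G2 z a' (z' a') d (u d) Hzacc (Hess2 a' Hia' HUa' a'a) (Hess2 d Hid HUd da) Hia' Hid Vza' zd MB.
    have uM : vle u (upd (upd z a' (z' a')) d (u d)).
      move=> e; rewrite !updE; case: (eqVneq e d) => [->|ed]; first done.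
      rewrite (uo e ed); case: (eqVneq e a') => [->|ea']; first by rewrite Vya'.
      exact: V1.
    exact: L _ _ _ MB uB uM CM.
  have P2 : d != a' -> (forall e, minn (z' e) (u e) <= C (inl w) u e) /\ vnorm (C (inl w) u) <= vnorm z'.
    move=> da.
    have MB : inB ew ef b (inl w) (upd (upd z' a (z a)) d (u d)).
      move=> e; rewrite !updE; case: ifP => [/eqP->|_]; first exact: uB.
      by case: ifP => [/eqP->|_]; [exact: Hzacc.1|exact: Hz'acc.1].
    have zd : z' d < u d by apply: leq_ltn_trans (V6 d dc) ud.
    have CM := G2 z' a (z a) d (u d) Hz'acc (Hess2' a Hia HUa aa') (Hess2' d Hid HUd da) Hia Hid Vz'a zd MB.
    have uM : vle u (upd (upd z' a (z a)) d (u d)).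
      move=> e; rewrite !updE; case: (eqVneq e d) => [->|ed]; first done.
      rewrite (uo e ed); case: (eqVneq e a) => [->|ea]; first by rewrite Vya.
      exact: V2.
    exact: L _ _ _ MB uB uM CM.
  suff : C (inl w) u d <= y d by rewrite leqNgt Cud.
  apply: vnorm_le.
    move=> e ed; have ue := uo e ed.
    case: (eqVneq e a') => [ea'|ea'].
      subst e.
      have da' : d != a' by rewrite eq_sym.
      by have h := (P2 da').1 a'; rewrite ue Vya' minnn in h; rewrite Vya'.
    case: (eqVneq d a) => [da|da].
      subst d.
      by have h := (P2 aa').1 e; rewrite ue (minn_idPr (V2 e ed)) in h.
    by have h := (P1 da).1 e; rewrite ue (minn_idPr (V1 e ea')) in h.
  case: (eqVneq d a) => [da|da].
    have da' : d != a' by rewrite da.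
    by have := (P2 da').2; rewrite ny nz nz'.
  by have := (P1 da).2; rewrite ny.
split=> //.
- by rewrite y2.
- split; last by move=> d _ HUd _; rewrite yE; exact: Hii.
  by do 4 (split=> //); rewrite yE.
- split; last by move=> d _ HUd _; rewrite y2; exact: Hii.
  by do 4 (split=> //); rewrite y2.
Qed.
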